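(* For a positive integer $m$, let $C(m)=\{c_1,\dots,c_m\}$ and $v^*_m$ be the vote $c_1\succ c_2\succ\dots\succ c_m$. For integers $0\le k\le m(m-1)/2$ and $j,i\in[m]$, let $T(m,k,j,i)$ be the number of votes over $C(m)$ at swap distance exactly $k$ from $v^*_m$ that rank $c_j$ in position $i$. There is an algorithm that computes $T(m,k,j,i)$ in time polynomial in $m$.
   Context: A vote over a candidate set is a total order (position 1 is the top). The swap distance between two votes is the minimum number of swaps of adjacent candidates needed to transform one into the other (equivalently, the number of candidate pairs ordered differently). *)

(* Defs.v *)
From mathcomp Require Import all_boot all_fingroup.
Set Implicit Arguments. Unset Strict Implicit. Unset Printing Implicit Defensive.

(* Candidates of C(m) are c_1..c_m, represented (0-indexed) by 'I_m.
   A vote over C(m) is represented by its ranking permutation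
   r : {perm 'I_m}, where r c is the (0-indexed) position of candidate c
   (position 0 = top).  This is a bijection with total orders on C(m). *)
Definition vote (m : nat) := {perm 'I_m}.

Definition vstar (m : nat) : vote m := 1%g.

Definition swap_dist (m : nat) (u v : vote m) : nat :=
  #|[set p : 'I_m * 'I_m |
      (p.1 < p.2) && ((u p.1 < u p.2) != (v p.1 < v p.2))]|.

(* T(m,k,j,i) with 1-indexed j, i. *)
Definition T (m k j i : nat) : nat :=
  #|[set r : vote m | (swap_dist r (vstar m) == k) &&
       [exists c : 'I_m, (val c == j.-1) && (val (r c) == i.-1)]]|.

(* A random-access machine with unit-cost addition, truncated subtraction,
   constants, indirect addressing and conditional jumps (no multiplication),
   a standard model polynomially equivalent to Turing machines. *)
Inductive instr : Type :=
  | IConst of nat & nat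
  | IAdd of nat & nat & nat
  | ISub of nat & nat & nat
  | ILoad of nat & nat
  | IStore of nat & nat
  | IJz of nat & nat
  | IJmp of nat
  | IHalt.

Definition program := seq instr.
Definition memory := nat -> nat.

Definition upd (M : memory) (r v : nat) : memory :=
  fun x => if x == r then v else M x.

(* One step: None means halted (pc out of range or Halt instruction). *)
Definition step (p : program) (st : nat * memory) : option (nat * memory) :=
  let: (pc, M) := st in
  match nth IHalt p pc with
  | IConst r n => Some (pc.+1, upd M r n)
  | IAdd r a b => Some (pc.+1, upd M r (M a + M b))
  | ISub r a b => Some (pc.+1, upd M r (M a - M b))
  | ILoad r a => Some (pc.+1, upd M r (M (M a)))
  | IStore a b => Some (pc.+1, upd M (M a) (M b))
  | IJz a l => Some (if M a == 0 then l else pc.+1, M)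
  | IJmp l => Some (l, M)
  | IHalt => None
  end.

Fixpoint run (p : program) (fuel : nat) (st : nat * memory) : option memory :=
  match step p st with
  | None => Some st.2
  | Some st' => if fuel is n.+1 then run p n st' else None
  end.

(* Input convention: registers 0..3 hold m, k, j, i; all else 0; pc = 0.
   Output: register 0 at halting time. *)
Definition init4 (a b c d : nat) : nat * memory :=
  (0, fun x => if x == 0 then a else if x == 1 then b
               else if x == 2 then c else if x == 3 then d else 0).

(* Main.v *)
Require Import Defs.
From mathcomp Require Import all_boot all_fingroup.
From mathcomp Require Import zify.
Set Implicit Arguments. Unset Strict Implicit. Unset Printing Implicit Defensive.

Definition invs m (r : {perm 'I_m}) : nat :=
  \sum_(a < m) \sum_(b < m) ((a < b) && (r b < r a)).

Lemma swap_invs m (r : {perm 'I_m}) : swap_dist r (vstar m) = invs r.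
Proof.
rewrite /swap_dist /invs cardsE -sum1_card big_mkcond /=.
rewrite -(pair_big xpredT xpredT (fun (a b : 'I_m) => if (a < b) && ((r a < r b) != (vstar m a < vstar m b)) then 1 else 0)) /=.
apply: eq_bigr => a _; apply: eq_bigr => b _.
rewrite /vstar !perm1.
case: ltnP => //= ab.
have : r a != r b by rewrite (inj_eq perm_inj) neq_ltn ab.
rewrite neq_ltn; case: ltngtP => //.
Qed.

Definition cntn m k c v : nat :=
  \sum_(r : {perm 'I_m}) ((invs r == k) && [exists x : 'I_m, (val x == c) && (val (r x) == v)]).

Lemma lift_ltn n (h : 'I_n) (x y : 'I_n.-1) : (lift h x < lift h y) = (x < y).
Proof. by rewrite !ltnNge /= leq_bump2. Qed.

Lemma sum_lt p t : \sum_(w < p) (w < t) = minn p t.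
Proof.
elim: p => [|p IH]; first by rewrite big_ord0 min0n.
rewrite big_ord_recr /= IH; case: (ltnP p t) => H; lia.
Qed.

Lemma invs_lift p (t : 'I_p.+1) (s : {perm 'I_p}) :
  invs (lift_perm ord0 t s) = t + invs s.
Proof.
rewrite /invs big_ord_recl big_ord_recl /= add0n.
congr (_ + _).
  have -> : (t : nat) = minn p t by apply/esym/minn_idPr; rewrite -ltnS.
  rewrite -(sum_lt p t).
  rewrite [RHS](reindex_inj (@perm_inj _ s)) /=.
  apply: eq_bigr => b _ /=; rewrite lift_perm_id lift_perm_lift /= /bump.
  case: (leqP t (s b)) => H; lia.
apply: eq_bigr => a _; rewrite big_ord_recl /= add0n.
apply: eq_bigr => b _; rewrite !lift_perm_lift lift_ltn.
by rewrite /bump /=.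
Qed.

Lemma lift_perm_bij p (t : 'I_p.+1) :
  {on [pred r : {perm 'I_p.+1} | r ord0 == t], bijective (lift_perm ord0 t)}.
Proof.
pose i0 : 'I_p.+1 := ord0.
pose ulsf i (s : 'S_p.+1) k := odflt k (unlift (s i) (s (lift i k))).
have ulsfK i (s : 'S_p.+1) k: lift (s i) (ulsf i s k) = s (lift i k).
  rewrite /ulsf; have:= neq_lift i k.
  by rewrite -(can_eq (permK s)) => /unlift_some[] ? ? ->.
have inj_ulsf: injective (ulsf i0 _).
  move=> s; apply: can_inj (ulsf (s i0) s^-1%g) _ => k'.
  by rewrite {1}/ulsf ulsfK !permK liftK.
exists (fun s => perm (inj_ulsf s)) => [s _ | s].
  by apply/permP=> k'; rewrite permE /ulsf lift_perm_lift lift_perm_id liftK.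
rewrite inE; move/(s _ =P _) => si0; apply/permP=> k.
case: (unliftP i0 k) => [k'|] ->; rewrite ?lift_perm_id //.
by rewrite lift_perm_lift -si0 permE ulsfK.
Qed.

Lemma cntn_front p k c v : c < p -> v <= p ->
  cntn p.+1 k c.+1 v =
  \sum_(t < p.+1 | (t != v :> nat) && (t <= k))
      cntn p (k - t) c (if t < v then v.-1 else v).
Proof.
move=> cp vp.
rewrite /cntn (partition_big (fun r : {perm 'I_p.+1} => r ord0) xpredT) //=.
rewrite [RHS]big_mkcond /=; apply: eq_bigr => t _.
rewrite (reindex (lift_perm ord0 t)) /=; last first.
  by apply: (subon_bij _ (lift_perm_bij t)) => r; rewrite !inE.
rewrite (eq_bigl xpredT); last by move=> s; rewrite lift_perm_id eqxx.
have E : forall s : {perm 'I_p},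
   [exists x : 'I_p.+1, (x == c.+1 :> nat) && (lift_perm ord0 t s x == v :> nat)] =
   (t != v :> nat) && [exists x : 'I_p, (x == c :> nat) && (s x == (if t < v then v.-1 else v) :> nat)].
  move=> s; apply/existsP/idP.
    case=> x /andP[/eqP xc /eqP xv].
    case: (unliftP ord0 x) xc xv => [x'|] -> //=.
    rewrite lift_perm_lift /= /bump /= add1n => [[xc]] xv.
    apply/andP; split; first by apply/eqP; case: (leqP t (s x')) xv => H; lia.
    apply/existsP; exists x'; rewrite xc eqxx /=.
    apply/eqP; case: (leqP t (s x')) xv => H; case: (ltnP t v) => H2; lia.
  case/andP=> tv /existsP[x' /andP[/eqP xc /eqP xv]].
  exists (lift ord0 x'); rewrite /= /bump /= add1n xc eqxx /= lift_perm_lift /= /bump.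
  apply/eqP; move: xv; case: (leqP t (s x')) => H; case: (ltnP t v) => H2; lia.
under eq_bigr => s _ do rewrite invs_lift E.
case: (t != v :> nat) => /=; last by rewrite big1 // => s _; rewrite andbF.
case: (leqP t k) => tk.
  by apply: eq_bigr => s _; congr (_ && _); apply/eqP/eqP; lia.
by rewrite big1 // => s _; rewrite (_ : (t + invs s == k) = false) //; apply/eqP; lia.
Qed.

Lemma cntn_base k v : cntn 1 k 0 v = (k == 0) && (v == 0).
Proof.
rewrite /cntn (eq_bigr (fun _ => nat_of_bool ((k == 0) && (v == 0)))).
  by rewrite sum_nat_const card_Sn mul1n.
move=> r _.
have -> : invs r = 0.
  rewrite /invs big_ord_recl big_ord0 big_ord_recl big_ord0 /=. by [].
have -> : [exists x : 'I_1, (x == 0 :> nat) && (r x == v :> nat)] = (v == 0).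
  apply/existsP/idP.
    case=> x /andP[_ /eqP <-]; by case: (r x) => [[]].
  move/eqP=> ->; exists ord0; by case: (r ord0) => [[]].
by rewrite eq_sym.
Qed.

Definition rvp n : {perm 'I_n} := perm (@rev_ord_inj n).
Definition phi n (r : {perm 'I_n}) : {perm 'I_n} := (rvp n * r * rvp n)%g.

Lemma phiE n r x : phi r x = rev_ord (r (rev_ord x)) :> 'I_n.
Proof. by rewrite /phi !permM !permE. Qed.

Lemma phiK n : involutive (@phi n).
Proof. by move=> r; apply/permP => x; rewrite !phiE !rev_ordK. Qed.

Lemma rev_lt n (x y : 'I_n) : (rev_ord x < rev_ord y) = (y < x).
Proof. rewrite /=; have := ltn_ord x; have := ltn_ord y; lia. Qed.

Lemma invs_phi n (r : {perm 'I_n}) : invs (phi r) = invs r.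
Proof.
rewrite /invs (reindex_inj (@rev_ord_inj n)) /=.
rewrite (eq_bigr (fun a : 'I_n => \sum_(b < n) ((b < a) && (r a < r b)))); last first.
  move=> a _; rewrite (reindex_inj (@rev_ord_inj n)) /=.
  by apply: eq_bigr => b _; rewrite !phiE !rev_ordK !rev_lt.
by rewrite exchange_big.
Qed.

Lemma cntn_sym n k c v : c < n -> v < n ->
  cntn n k c v = cntn n k (n.-1 - c) (n.-1 - v).
Proof.
move=> cn vn.
rewrite [RHS]/cntn (reindex_inj (can_inj (@phiK n))) /cntn.
apply: eq_bigr => r _; rewrite invs_phi; congr (_ && _).
apply/existsP/existsP.
  case=> x /andP[/eqP xc /eqP xv]; exists (rev_ord x).
  rewrite phiE rev_ordK /= xc xv; apply/andP; split; apply/eqP; lia.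
case=> x /andP[/eqP xc /eqP xv]; exists (rev_ord x).
move: xv xc; rewrite phiE /= => xv xc.
move: (ltn_ord (r (rev_ord x))) (ltn_ord x) => h1 h2.
apply/andP; split; apply/eqP; lia.
Qed.

Lemma T_cntn m k j i : T m k j i = cntn m k j.-1 i.-1.
Proof.
rewrite /T /cntn cardsE -sum1_card big_mkcond /=.
apply: eq_bigr => r _; rewrite unfold_in /= swap_invs.
by case: (_ && _).
Qed.

Lemma sum_cut (f : nat -> nat) n a k :
  \sum_(0 <= i < n) (if i + a <= k then f i else 0) = \sum_(i < minn n (k.+1 - a)) f i.
Proof.
rewrite -(big_mkord xpredT); elim: n => [|n IH]; first by rewrite min0n !big_geq.
rewrite big_nat_recr //= IH.
case: (leqP (n + a) k) => H.
  have -> : minn n.+1 (k.+1 - a) = (minn n (k.+1 - a)).+1 by lia.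
  rewrite big_nat_recr //=; congr (_ + _); congr (f _); lia.
have -> : minn n.+1 (k.+1 - a) = minn n (k.+1 - a) by lia.
by rewrite addn0.
Qed.

Lemma cntn_split p k c v : c < p -> v <= p ->
  cntn p.+1 k c.+1 v =
  \sum_(i < minn v k.+1) cntn p (k - i) c v.-1 +
  \sum_(i < minn p k - v) cntn p (k - v - 1 - i) c v.
Proof.
move=> cp vp; rewrite cntn_front // big_mkcond /=.
rewrite -(big_mkord xpredT (fun t => if (t != v) && (t <= k) then cntn p (k - t) c (if t < v then v.-1 else v) else 0)).
rewrite (@big_cat_nat _ _ _ v 0 p.+1) //=; last lia.
rewrite (@big_ltn_cond _ _ _ v p.+1) /=; last lia.
rewrite eqxx /= add0n.
congr (_ + _).
  have := sum_cut (fun i => cntn p (k - i) c v.-1) v 0 k; rewrite subn0 => <-.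
  apply: congr_big_nat => // t Ht.
  have tv : t < v by move: Ht; case/andP.
  rewrite addn0 (_ : (t != v) = true) /=; last by apply/eqP; lia.
  by rewrite tv.
have -> : minn p k - v = minn (p.+1 - v.+1) (k.+1 - v.+1) by lia.
rewrite -(sum_cut (fun i => cntn p (k - v - 1 - i) c v) _ v.+1 k) -{1}(add0n v.+1) big_addn.
apply: congr_big_nat => // t Ht.
rewrite (_ : (t + v.+1 != v) = true); last by apply/eqP; lia.
rewrite (_ : (t + v.+1 < v) = false); last by apply/negbTE; lia.
case: leqP => H //=; congr cntn; lia.
Qed.

Inductive cmd := CI of instr | CSeq of cmd & cmd | CWhile of nat & cmd.

Fixpoint clen c := match c with
  | CI _ => 1 | CSeq a b => clen a + clen b | CWhile _ b => (clen b).+2 end.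

Fixpoint compile (o : nat) (c : cmd) : seq instr := match c with
  | CI i => [:: i]
  | CSeq a b => compile o a ++ compile (o + clen a) b
  | CWhile r b => IJz r (o + (clen b).+2) :: rcons (compile o.+1 b) (IJmp o) end.

Lemma size_comp c : forall o, size (compile o c) = clen c.
Proof.
elim: c => [i|a IHa b IHb|r b IHb] o /=; first by [].
  by rewrite size_cat IHa IHb.
by rewrite size_rcons IHb.
Qed.

Definition basic i := match i with IJz _ _ | IJmp _ | IHalt => false | _ => true end.
Definition eff i (M : memory) : memory := match i with
  | IConst r n => upd M r n
  | IAdd r a b => upd M r (M a + M b)
  | ISub r a b => upd M r (M a - M b)
  | ILoad r a => upd M r (M (M a))
  | IStore a b => upd M (M a) (M b)
  | _ => M end.

Fixpoint stepsN p n st := match n with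
  | 0 => Some st
  | n.+1 => match step p st with Some st' => stepsN p n st' | None => None end end.

Lemma stepsN_add p n1 n2 st st1 :
  stepsN p n1 st = Some st1 -> stepsN p (n1 + n2) st = stepsN p n2 st1.
Proof.
elim: n1 st => [|n IH] st /=; first by case=> ->.
by case: (step p st) => // st'; apply: IH.
Qed.

Lemma stepsN_S p n st st' : step p st = Some st' -> stepsN p n.+1 st = stepsN p n st'.
Proof. by move=> /= ->. Qed.

Inductive exec : cmd -> memory -> nat -> memory -> Prop :=
| ExI i M : basic i -> exec (CI i) M 1 (eff i M)
| ExSeq a b M M1 M2 n1 n2 : exec a M n1 M1 -> exec b M1 n2 M2 -> exec (CSeq a b) M (n1 + n2) M2
| ExW0 r b M : M r = 0 -> exec (CWhile r b) M 1 M
| ExW1 r b M M1 M2 n1 n2 : M r <> 0 -> exec b M n1 M1 -> exec (CWhile r b) M1 n2 M2 ->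
    exec (CWhile r b) M (n1 + n2).+2 M2.

Lemma nth_cat_mid (pre l post : seq instr) i : i < size l ->
  nth IHalt (pre ++ l ++ post) (size pre + i) = nth IHalt l i.
Proof.
move=> H; rewrite nth_cat ltnNge leq_addr /= addKn nth_cat H //.
Qed.

Theorem exec_sim c M n M' : exec c M n M' -> forall pre post,
  stepsN (pre ++ compile (size pre) c ++ post) n (size pre, M) = Some (size pre + clen c, M').
Proof.
elim=> {c M n M'}.
- move=> i M Hi pre post /=.
  have := @nth_cat_mid pre [:: i] post 0 (ltn0Sn 0); rewrite addn0 => E.
  by rewrite /step E; case: i Hi E => //= *; rewrite addn1.
- move=> a b M M1 M2 n1 n2 _ IHa _ IHb pre post /=.
  rewrite (stepsN_add n2 (_ : _ = Some (size pre + clen a, M1))).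
    have := IHb (pre ++ compile (size pre) a) post.
    by rewrite size_cat size_comp -!catA addnA.
  by rewrite -catA; apply: IHa.
- move=> r b M Hr pre post /=.
  have := @nth_cat_mid pre (compile (size pre) (CWhile r b)) post 0; rewrite addn0 size_comp /= => E.
  by rewrite /step E //= Hr eqxx.
- move=> r b M M1 M2 n1 n2 Hr _ IHb _ IHw pre post.
  set p := pre ++ _.
  have E0 := @nth_cat_mid pre (compile (size pre) (CWhile r b)) post 0; rewrite addn0 size_comp /= in E0.
  have S0 : step p (size pre, M) = Some ((size pre).+1, M).
    rewrite /step /p E0 //.
    by have -> : (M r == 0) = false by apply/negbTE/eqP.
  rewrite (stepsN_S _ S0) -addnS.
  have H1 := IHb (rcons pre (IJz r (size pre + (clen b).+2))) (IJmp (size pre) :: post).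
  rewrite size_rcons -cats1 -catA /= in H1.
  rewrite (stepsN_add _ (_ : _ = Some ((size pre).+1 + clen b, M1))); last first.
    by rewrite -H1 /p /= -cats1 -catA.
  have E1 := @nth_cat_mid pre (compile (size pre) (CWhile r b)) post (clen b).+1.
  rewrite size_comp in E1.
  have S1 : step p ((size pre).+1 + clen b, M1) = Some (size pre, M1).
    by rewrite /step /p addSnnS E1 // /= nth_rcons size_comp ltnn eqxx.
  rewrite (stepsN_S _ S1).
  exact: IHw.
Qed.

Lemma run_stepsN p n st st' fuel : stepsN p n st = Some st' -> step p st' = None ->
  n <= fuel -> run p fuel st = Some st'.2.
Proof.
elim: n fuel st => [|n IH] fuel st /=.
  by case=> -> H _; case: fuel => [|f] /=; rewrite H.
case E: (step p st) => [st1|] // H1 H2 Hn.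
case: fuel Hn => [|f] Hn //=; rewrite E; exact: IH.
Qed.

Lemma run_exec c M n M' fuel : exec c M n M' -> n <= fuel ->
  run (compile 0 c) fuel (0, M) = Some M'.
Proof.
move=> H Hn.
have := exec_sim H [::] [::]; rewrite /= cats0 add0n => S.
apply: (run_stepsN S) => //=.
by rewrite nth_default // size_comp.
Qed.

Definition wp c (Q : nat -> memory -> Prop) M := exists n M', exec c M n M' /\ Q n M'.

Lemma wp_conseq c (Q1 Q : nat -> memory -> Prop) M :
  wp c Q1 M -> (forall n M', Q1 n M' -> Q n M') -> wp c Q M.
Proof. by case=> n [M' [H1 H2]] H; exists n, M'; split => //; apply: H. Qed.

Lemma wp_I i Q M : basic i -> Q 1 (eff i M) -> wp (CI i) Q M.
Proof. by move=> Hb HQ; exists 1, (eff i M); split => //; constructor. Qed.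

Lemma wp_seq a b Q M :
  wp a (fun n1 M1 => wp b (fun n2 M2 => Q (n1 + n2) M2) M1) M -> wp (CSeq a b) Q M.
Proof.
case=> n1 [M1 [H1 [n2 [M2 [H2 HQ]]]]].
by exists (n1 + n2), M2; split => //; econstructor; eauto.
Qed.

Lemma wp_for r body N B (P : nat -> memory -> Prop) Q M :
  P 0 M -> M r = N ->
  (forall i M1, i < N -> P i M1 -> M1 r = N - i ->
     wp body (fun n M2 => n <= B /\ P i.+1 M2 /\ M2 r = N - i.+1) M1) ->
  (forall n M2, P N M2 -> n <= N * B.+2 + 1 -> Q n M2) ->
  wp (CWhile r body) Q M.
Proof.
move=> P0 HN Hb HQ.
suff: forall d i M1, d = N - i -> i <= N -> P i M1 -> M1 r = N - i ->
   exists n M2, exec (CWhile r body) M1 n M2 /\ n <= d * B.+2 + 1 /\ P N M2.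
  move=> /(_ N 0 M); rewrite subn0 => /(_ erefl (leq0n _) P0 HN) [n [M2 [H1 [H2 H3]]]].
  by exists n, M2; split => //; apply: HQ.
elim=> [|d IH] i M1 Hd Hi Pi Hr.
  have Ei : i = N by lia.
  subst i; exists 1, M1; split; first by constructor; rewrite Hr subnn.
  by split.
have iN : i < N by lia.
case: (Hb i M1 iN Pi Hr) => n1 [M2 [E1 [Hn1 [P2 Hr2]]]].
case: (IH i.+1 M2 _ iN P2 Hr2) => [|n2 [M3 [E2 [Hn2 P3]]]]; first by lia.
exists (n1 + n2).+2, M3; split; first by econstructor; eauto; rewrite Hr; lia.
split => //; rewrite mulSn; lia.
Qed.

Lemma upd_same (M : memory) r v x : x = r -> upd M r v x = v.
Proof. by move=> ->; rewrite /upd eqxx. Qed.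
Lemma upd_other (M : memory) r v x : x <> r -> upd M r v x = M x.
Proof. by move=> H; rewrite /upd; case: eqP. Qed.

Fixpoint block (l : seq cmd) : cmd := match l with
  | [::] => CI (IConst 99 0) | [:: c] => c | c :: l => CSeq c (block l) end.

Ltac clear_mem := repeat match goal with
  | H : ?M _ = _ |- _ => lazymatch type of M with memory => clear H | nat -> nat => clear H end
  | H : forall _, _ |- _ => clear H
  end.
Ltac slia := clear_mem; lia.

Ltac norm_upd := repeat match goal with
 | |- context [upd ?M ?r ?v ?x] =>
    first [ rewrite (@upd_same M r v x erefl)
          | rewrite (@upd_other M r v x ltac:(discriminate))
          | rewrite (@upd_other M r v x ltac:(slia))
          | rewrite (@upd_same M r v x ltac:(slia)) ]
 end.
Ltac rw_mem := repeat match goal with H : ?M ?x = _ |- context [?M ?x] =>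
  lazymatch type of M with memory => rewrite H | nat -> nat => rewrite H end end.
Ltac norm := repeat progress (norm_upd; rw_mem).

Ltac wstep :=
  match goal with
  | |- wp (block _) _ _ => cbn [block]; wstep
  | |- wp (CSeq (CI _) _) _ _ => apply wp_seq; apply wp_I; [reflexivity|]; cbn [eff]; norm
  | |- wp (CI _) _ _ => apply wp_I; [reflexivity|]; cbn [eff]; norm
  end.

Definition TLOOP := CWhile 20 (block [:: CI (ILoad 21 19); CI (IAdd 18 18 21);
                                          CI (ISub 19 19 8); CI (ISub 20 20 4)]).

Lemma tloop_spec M N P0 S a0 (f : nat -> nat) :
  M 20 = N -> M 19 = P0 -> M 18 = a0 -> M 8 = S -> M 4 = 1 ->
  (forall i, i < N -> M (P0 - i * S) = f i) ->
  (forall i, i < N -> 23 < P0 - i * S) ->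
  wp TLOOP (fun n M' => n <= N * 6 + 1 /\ M' 18 = a0 + \sum_(i < N) f i /\
     M' 19 = P0 - N * S /\ (forall x, x < 18 \/ 21 < x -> M' x = M x)) M.
Proof.
move=> H20 H19 H18 H8 H4 Hf Hp.
apply: (wp_for (N := N) (B := 4)
  (P := fun i M1 => M1 18 = a0 + \sum_(j < i) f j /\ M1 19 = P0 - i * S /\
          (forall x, x < 18 \/ 21 < x -> M1 x = M x))) => //.
- by rewrite big_ord0 addn0 H18 mul0n subn0 H19.
- move=> i M1 iN [h18 [h19 hfr]] h20.
  have h8 : M1 8 = S by rewrite hfr ?H8 //; lia.
  have h4 : M1 4 = 1 by rewrite hfr ?H4 //; lia.
  have hp := Hp i iN.
  have hl : M1 (P0 - i * S) = f i by rewrite hfr ?Hf //; lia.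
  do 4 wstep.
  split => //; split; last by lia.
  split; first by rewrite big_ord_recr /= addnA.
  split; first by rewrite mulSnr subnDA.
  by move=> x Hx; norm; apply: hfr.

Qed.

Definition VBODY := block [::
  CI (IConst 18 0);
  CI (IAdd 21 14 4); CI (ISub 22 17 21); CI (ISub 20 17 22);
  CI (IAdd 19 9 15); CI (IAdd 19 19 17); CI (IAdd 19 19 17); CI (ISub 19 19 4); CI (ISub 19 19 4);
  TLOOP;
  CI (IAdd 19 19 4); CI (IAdd 19 19 4); CI (ISub 19 19 8);
  CI (ISub 21 11 14); CI (ISub 21 11 21); CI (ISub 20 21 17);
  TLOOP;
  CI (IAdd 21 10 15); CI (IAdd 21 21 17); CI (IAdd 21 21 17);
  CI (IStore 21 18);
  CI (IAdd 17 17 4); CI (ISub 16 16 4) ].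

Definition otbl (M : memory) m K ob p c :=
  forall k v, k <= K -> v < p -> M (ob + 2 * (k * m + v)) = cntn p k c v.

Lemma vbody_spec M m K ob nb p c k v :
  M 4 = 1 -> M 8 = 2 * m -> M 9 = ob -> M 10 = nb -> M 11 = p -> M 14 = k ->
  M 15 = k * (2 * m) -> M 17 = v ->
  100 <= ob -> 100 <= nb -> 1 <= p < m -> c < p -> k <= K -> v <= p ->
  otbl M m K ob p c ->
  wp VBODY (fun n M' => n <= 12 * m + 23 /\ M' 17 = v.+1 /\ M' 16 = M 16 - 1 /\
     M' (nb + 2 * (k * m + v)) = cntn p.+1 k c.+1 v /\
     forall x, x <> nb + 2 * (k * m + v) -> x < 16 \/ 22 < x -> M' x = M x) M.
Proof.
move=> h4 h8 h9 h10 h11 h14 h15 h17 hob hnb hp hc hk hv tb.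
rewrite /VBODY; do 9 wstep.

apply: wp_seq.
apply: wp_conseq.
  apply: (tloop_spec (N := minn v k.+1) (P0 := ob + k * (2 * m) + v + v - 1 - 1)
           (S := 2 * m) (a0 := 0) (f := fun i => cntn p (k - i) c v.-1)); try by norm; lia.
    move=> i Hi.
    have : i * (2 * m) <= k * (2 * m) by apply: leq_mul => //; lia.
    move=> hint; norm.
    have -> : ob + k * (2 * m) + v + v - 1 - 1 - i * (2 * m) = ob + 2 * ((k - i) * m + v.-1) by nia.
    rewrite tb //; lia.
  move=> i Hi.
  have : i * (2 * m) <= k * (2 * m) by apply: leq_mul => //; lia.
  lia.
move=> n1 M2 [Hn1 [e18 [e19 fr]]].
have e4 : M2 4 = 1 by rewrite fr; try lia; norm.
have e8 : M2 8 = 2 * m by rewrite fr; try lia; norm.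
have e10 : M2 10 = nb by rewrite fr; try lia; norm.
have e11 : M2 11 = p by rewrite fr; try lia; norm.
have e14 : M2 14 = k by rewrite fr; try lia; norm.
have e15 : M2 15 = k * (2 * m) by rewrite fr; try lia; norm.
have e17 : M2 17 = v by rewrite fr; try lia; norm.
do 6 wstep.
apply: wp_seq.
apply: wp_conseq.
  apply: (tloop_spec (N := minn p k - v)
     (P0 := ob + k * (2 * m) + v + v - 1 - 1 - minn v k.+1 * (2 * m) + 1 + 1 - 2 * m)
           (S := 2 * m) (a0 := 0 + \sum_(i < minn v k.+1) cntn p (k - i) c v.-1)
           (f := fun i => cntn p (k - v - 1 - i) c v));
    [ by norm; lia | by norm | by norm | by norm | by norm | | ].
    move=> i Hi.
    have N1v : minn v k.+1 = v by lia.
    rewrite N1v.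
    have : (v.+1 + i) * (2 * m) <= k * (2 * m) by apply: leq_mul => //; lia.
    move=> hint; norm.
    have -> : ob + k * (2 * m) + v + v - 1 - 1 - v * (2 * m) + 1 + 1 - 2 * m - i * (2 * m)
       = ob + 2 * ((k - v - 1 - i) * m + v) by rewrite !mulnBl mul1n; slia.
    rewrite fr; [|lia]; norm; rewrite tb //; lia.
  move=> i Hi.
  have N1v : minn v k.+1 = v by lia.
  rewrite N1v.
  have : (v.+1 + i) * (2 * m) <= k * (2 * m) by apply: leq_mul => //; lia.
  lia.
move=> n2 M3 [Hn2 [f18 [f19 fr2]]].
have r4 : M3 4 = 1 by rewrite fr2; try lia; norm.
have r10 : M3 10 = nb by rewrite fr2; try lia; norm.
have r15 : M3 15 = k * (2 * m) by rewrite fr2; try lia; norm.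
have r17 : M3 17 = v by rewrite fr2; try lia; norm.
have r16 : M3 16 = M 16 by rewrite fr2; try lia; norm; rewrite fr; try lia; norm.
do 6 wstep.
split; first by lia.
split; first by lia.
split; first by lia.
split.
  by rewrite add0n cntn_split.
move=> x Hx Hx2; norm.
rewrite fr2; try lia; norm.
by rewrite fr; try lia; norm.
Qed.

Definition KBODY := block [:: CI (IAdd 16 11 4); CI (IConst 17 0); CWhile 16 VBODY;
  CI (IAdd 14 14 4); CI (IAdd 15 15 8); CI (ISub 13 13 4)].
Definition LEVEL := block [:: CI (IAdd 13 1 4); CI (IConst 14 0); CI (IConst 15 0);
  CWhile 13 KBODY; CI (IAdd 21 9 5); CI (IAdd 9 10 5); CI (IAdd 10 21 5); CI (IAdd 11 11 4)].

Definition ptbl (M : memory) m K nb p c k v :=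
  forall k' v', k' <= K -> v' < p.+1 -> (k' < k \/ k' = k /\ v' < v) ->
    M (nb + 2 * (k' * m + v')) = cntn p.+1 k' c.+1 v'.

Lemma idx_neq m k v k' v' : v < m -> v' < m -> (k' < k \/ k' = k /\ v' < v) ->
  k' * m + v' <> k * m + v.
Proof.
move=> vm vm' [H|[-> H]]; last by lia.
have : k'.+1 * m <= k * m by apply: leq_mul.
rewrite mulSn; lia.
Qed.

Lemma vloop_spec M m K ob nb p c k :
  M 4 = 1 -> M 8 = 2 * m -> M 9 = ob -> M 10 = nb -> M 11 = p -> M 14 = k ->
  M 15 = k * (2 * m) -> M 16 = p.+1 -> M 17 = 0 ->
  (ob = 100 /\ nb = 101 \/ ob = 101 /\ nb = 100) -> 1 <= p < m -> c < p -> k <= K ->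
  otbl M m K ob p c -> ptbl M m K nb p c k 0 ->
  wp (CWhile 16 VBODY) (fun n M' => n <= m * (12 * m + 25) + 1 /\
     (forall x, x < 16 \/ 22 < x < 98 -> M' x = M x) /\
     otbl M' m K ob p c /\ ptbl M' m K nb p c k.+1 0) M.
Proof.
move=> h4 h8 h9 h10 h11 h14 h15 h16 h17 hobnb hp hc hk tb pt.
apply: (wp_for (N := p.+1) (B := 12 * m + 23)
  (P := fun i M1 => M1 17 = i /\ (forall x, x < 16 \/ 22 < x < 98 -> M1 x = M x) /\
          otbl M1 m K ob p c /\ ptbl M1 m K nb p c k i)) => //.
- move=> i M1 ip [g17 [gfr [gtb gpt]]] g16.
  have g4 : M1 4 = 1 by rewrite gfr //; lia.
  have g8 : M1 8 = 2 * m by rewrite gfr //; lia.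
  have g9 : M1 9 = ob by rewrite gfr //; lia.
  have g10 : M1 10 = nb by rewrite gfr //; lia.
  have g11 : M1 11 = p by rewrite gfr //; lia.
  have g14 : M1 14 = k by rewrite gfr //; lia.
  have g15 : M1 15 = k * (2 * m) by rewrite gfr //; lia.
  apply: wp_conseq; first by apply: (@vbody_spec M1 m K ob nb p c k i g4 g8 g9 g10 g11 g14 g15 g17) => //; lia.
  move=> n M2 [Hn [f17 [f16 [fst ffr]]]].
  split => //; split; last by rewrite f16 g16; lia.
  split => //; split.
    move=> x Hx; rewrite ffr ?gfr //; lia.
  split.
    move=> k' v' Hk Hv; rewrite ffr ?gtb //; lia.
  move=> k' v' Hk Hv Hc.
  have [E|E] : (k' = k /\ v' = i) \/ (k' < k \/ k' = k /\ v' < i) by lia.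
    by case: E => -> ->.
  have := @idx_neq m k i k' v' ltac:(lia) ltac:(lia) E => E2.
  rewrite ffr ?gpt //; lia.
- move=> n M2 [_ [gfr [gtb gpt]]] Hn; split.
    apply: leq_trans Hn _; rewrite leq_add2r; apply: leq_mul; lia.
  split => //; split => //.
  move=> k' v' Hk Hv Hc; apply: gpt => //; lia.
Qed.

Lemma level_spec M m K ob nb p c :
  M 1 = K -> M 4 = 1 -> M 5 = 0 -> M 8 = 2 * m -> M 9 = ob -> M 10 = nb -> M 11 = p ->
  (ob = 100 /\ nb = 101 \/ ob = 101 /\ nb = 100) -> 1 <= p < m -> c < p ->
  otbl M m K ob p c ->
  wp LEVEL (fun n M' => n <= K.+1 * (m * (12 * m + 25) + 8) + 8 /\
     M' 9 = nb /\ M' 10 = ob /\ M' 11 = p.+1 /\ M' 15 = K.+1 * (2 * m) /\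
     (forall x, x < 9 \/ 22 < x < 98 -> M' x = M x) /\ otbl M' m K nb p.+1 c.+1) M.
Proof.
move=> h1 h4 h5 h8 h9 h10 h11 hobnb hp hc tb.
rewrite /LEVEL; do 3 wstep.
apply: wp_seq.
apply: (wp_for (N := K.+1) (B := m * (12 * m + 25) + 6)
  (P := fun i M1 => M1 14 = i /\ M1 15 = i * (2 * m) /\
          (forall x, x < 13 \/ 22 < x < 98 -> M1 x = M x) /\
          otbl M1 m K ob p c /\ ptbl M1 m K nb p c i 0)).
- split => //; split => //; split.
    by move=> x Hx; norm.
  split; first by move=> k v Hk Hv; norm; apply: tb.
  move=> k v Hk Hv Hc; lia.
- by norm; lia.
- move=> i M1 iK [g14 [g15 [gfr [gtb gpt]]]] g13.
  have g4 : M1 4 = 1 by rewrite gfr //; lia.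
  have g8 : M1 8 = 2 * m by rewrite gfr //; lia.
  have g9 : M1 9 = ob by rewrite gfr //; lia.
  have g10 : M1 10 = nb by rewrite gfr //; lia.
  have g11 : M1 11 = p by rewrite gfr //; lia.
  rewrite /KBODY; do 2 wstep.
  apply: wp_seq; apply: wp_conseq.
    apply: (@vloop_spec _ m K ob nb p c i); try by norm; lia.
    + by move=> k v Hk Hv; norm; apply: gtb.
    + by move=> k v Hk Hv Hc; norm; apply: gpt.
  move=> n M2 [Hn [ffr [ftb fpt]]].
  have e4 : M2 4 = 1 by rewrite ffr; [norm|lia].
  have e8 : M2 8 = 2 * m by rewrite ffr; [norm|lia].
  have e14 : M2 14 = i by rewrite ffr; [norm|lia].
  have e15 : M2 15 = i * (2 * m) by rewrite ffr; [norm|lia].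
  have e13 : M2 13 = K.+1 - i by rewrite ffr; [norm|lia].
  do 3 wstep.
  split; first by lia.
  split; last by lia.
  split; first by lia.
  split; first by rewrite mulSn; lia.
  split.
    by move=> x Hx; norm; rewrite ffr; [norm; rewrite gfr|lia].
  split.
    by move=> k v Hk Hv; norm; apply: ftb.
  by move=> k v Hk Hv Hc; norm; apply: fpt.
- move=> n M2 [g14 [g15 [gfr [gtb gpt]]]] Hn.
  have e5 : M2 5 = 0 by rewrite gfr //; lia.
  have e9 : M2 9 = ob by rewrite gfr //; lia.
  have e10 : M2 10 = nb by rewrite gfr //; lia.
  have e11 : M2 11 = p by rewrite gfr //; lia.
  have e4 : M2 4 = 1 by rewrite gfr //; lia.
  do 4 wstep.
  split; first by lia.
  split; first by lia.
  split; first by lia.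
  split; first by lia.
  split; first by [].
  split.
    by move=> x Hx; norm; rewrite gfr //; lia.
  move=> k v Hk Hv; norm; apply: gpt => //; lia.
Qed.

Definition RVBODY := block [:: CI (ILoad 21 19); CI (IStore 22 21); CI (ISub 19 19 4);
  CI (ISub 19 19 4); CI (IAdd 22 22 4); CI (IAdd 22 22 4); CI (ISub 16 16 4)].
Definition RKBODY := block [:: CI (IAdd 16 11 5);
   CI (IAdd 19 9 15); CI (IAdd 19 19 11); CI (IAdd 19 19 11); CI (ISub 19 19 4); CI (ISub 19 19 4);
   CI (IAdd 22 10 15); CWhile 16 RVBODY; CI (IAdd 15 15 8); CI (ISub 13 13 4)].
Definition REV := block [:: CI (IAdd 13 1 4); CI (IConst 15 0); CWhile 13 RKBODY;
   CI (IAdd 21 9 5); CI (IAdd 9 10 5); CI (IAdd 10 21 5)].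

Definition ptbl2 (M : memory) m K nb n c k v :=
  forall k' v', k' <= K -> v' < n -> (k' < k \/ k' = k /\ v' < v) ->
    M (nb + 2 * (k' * m + v')) = cntn n k' c v'.

Lemma rvloop_spec M m K ob nb n k :
  M 4 = 1 -> M 16 = n -> M 19 = ob + k * (2 * m) + n + n - 1 - 1 -> M 22 = nb + k * (2 * m) ->
  (ob = 100 /\ nb = 101 \/ ob = 101 /\ nb = 100) -> 1 <= n <= m -> k <= K ->
  otbl M m K ob n n.-1 -> ptbl2 M m K nb n 0 k 0 ->
  wp (CWhile 16 RVBODY) (fun c M' => c <= n * 9 + 1 /\
     (forall x, x < 16 \/ 22 < x < 98 -> M' x = M x) /\
     otbl M' m K ob n n.-1 /\ ptbl2 M' m K nb n 0 k.+1 0) M.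
Proof.
move=> h4 h16 h19 h22 hobnb hn hk tb pt.
apply: (wp_for (N := n) (B := 7)
  (P := fun i M1 => M1 19 = ob + k * (2 * m) + n + n - 1 - 1 - 2 * i /\
          M1 22 = nb + k * (2 * m) + 2 * i /\
          (forall x, x < 16 \/ 22 < x < 98 -> M1 x = M x) /\
          otbl M1 m K ob n n.-1 /\ ptbl2 M1 m K nb n 0 k i)) => //.
- by split; [lia|split; [lia|]].
- move=> i M1 ip [g19 [g22 [gfr [gtb gpt]]]] g16.
  have g4 : M1 4 = 1 by rewrite gfr //; lia.
  have hl : M1 (ob + k * (2 * m) + n + n - 1 - 1 - 2 * i) = cntn n k 0 i.
    have -> : ob + k * (2 * m) + n + n - 1 - 1 - 2 * i = ob + 2 * (k * m + (n.-1 - i)) by lia.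
    rewrite gtb; [|lia|lia].
    rewrite (@cntn_sym n k 0 i); [|lia|lia].
    by rewrite subn0.
  rewrite /RVBODY; do 7 wstep.
  split; first by lia.
  split; last by lia.
  split; first by lia.
  split; first by lia.
  split.
    by move=> x Hx; norm; apply: gfr.
  split.
    move=> k' v' Hk Hv; norm; apply: gtb => //.
  move=> k' v' Hk Hv Hc.
  have [E|E] : (k' = k /\ v' = i) \/ (k' < k \/ k' = k /\ v' < i) by lia.
    case: E => -> ->; norm; by [].
  have := @idx_neq m k i k' v' ltac:(lia) ltac:(lia) E => E2.
  norm; apply: gpt => //.
- move=> c M2 [_ [_ [gfr [gtb gpt]]]] Hc; split => //; split => //; split => //.
  move=> k' v' Hk Hv Hc'; apply: gpt => //; lia.
Qed.

Lemma rev_spec M m K ob nb n :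
  M 1 = K -> M 4 = 1 -> M 5 = 0 -> M 8 = 2 * m -> M 9 = ob -> M 10 = nb -> M 11 = n ->
  (ob = 100 /\ nb = 101 \/ ob = 101 /\ nb = 100) -> 1 <= n <= m ->
  otbl M m K ob n n.-1 ->
  wp REV (fun c M' => c <= K.+1 * (n * 9 + 12) + 6 /\
     M' 9 = nb /\ M' 10 = ob /\ M' 11 = n /\ M' 15 = K.+1 * (2 * m) /\
     (forall x, x < 9 \/ 22 < x < 98 -> M' x = M x) /\ otbl M' m K nb n 0) M.
Proof.
move=> h1 h4 h5 h8 h9 h10 h11 hobnb hn tb.
rewrite /REV; do 2 wstep.
apply: wp_seq.
apply: (wp_for (N := K.+1) (B := n * 9 + 10)
  (P := fun i M1 => M1 15 = i * (2 * m) /\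
          (forall x, x < 13 \/ 22 < x < 98 -> M1 x = M x) /\
          otbl M1 m K ob n n.-1 /\ ptbl2 M1 m K nb n 0 i 0)).
- split => //; split.
    by move=> x Hx; norm.
  split; first by move=> k v Hk Hv; norm; apply: tb.
  move=> k v Hk Hv Hc; lia.
- by norm; lia.
- move=> i M1 iK [g15 [gfr [gtb gpt]]] g13.
  have g4 : M1 4 = 1 by rewrite gfr //; lia.
  have g5 : M1 5 = 0 by rewrite gfr //; lia.
  have g8 : M1 8 = 2 * m by rewrite gfr //; lia.
  have g9 : M1 9 = ob by rewrite gfr //; lia.
  have g10 : M1 10 = nb by rewrite gfr //; lia.
  have g11 : M1 11 = n by rewrite gfr //; lia.
  rewrite /RKBODY; do 7 wstep.
  apply: wp_seq; apply: wp_conseq.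
    apply: (@rvloop_spec _ m K ob nb n i); try by norm; lia.
    + by move=> k v Hk Hv; norm; apply: gtb.
    + by move=> k v Hk Hv Hc; norm; apply: gpt.
  move=> c M2 [Hc [ffr [ftb fpt]]].
  have e4 : M2 4 = 1 by rewrite ffr; [norm|lia].
  have e8 : M2 8 = 2 * m by rewrite ffr; [norm|lia].
  have e15 : M2 15 = i * (2 * m) by rewrite ffr; [norm|lia].
  have e13 : M2 13 = K.+1 - i by rewrite ffr; [norm|lia].
  do 2 wstep.
  split; first by lia.
  split; last by lia.
  split; first by rewrite mulSn; lia.
  split.
    by move=> x Hx; norm; rewrite ffr; [norm; rewrite gfr|lia].
  split.
    by move=> k v Hk Hv; norm; apply: ftb.
  by move=> k v Hk Hv Hc'; norm; apply: fpt.
- move=> c M2 [g15 [gfr [gtb gpt]]] Hc.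
  have e5 : M2 5 = 0 by rewrite gfr //; lia.
  have e9 : M2 9 = ob by rewrite gfr //; lia.
  have e10 : M2 10 = nb by rewrite gfr //; lia.
  have e11 : M2 11 = n by rewrite gfr //; lia.
  do 3 wstep.
  split; first by lia.
  split; first by lia.
  split; first by lia.
  split; first by lia.
  split; first by [].
  split.
    by move=> x Hx; norm; rewrite gfr //; lia.
  move=> k v Hk Hv; norm; apply: gpt => //; lia.
Qed.

Definition OUTER := CWhile 24 (block [:: LEVEL; CI (ISub 24 24 4)]).
Definition Blev m K := K.+1 * (m * (12 * m + 25) + 8) + 8.

Lemma outer_spec M m K N p0 c0 ob0 nb0 :
  M 1 = K -> M 4 = 1 -> M 5 = 0 -> M 8 = 2 * m -> M 9 = ob0 -> M 10 = nb0 -> M 11 = p0 ->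
  M 24 = N ->
  (ob0 = 100 /\ nb0 = 101 \/ ob0 = 101 /\ nb0 = 100) -> 1 <= p0 -> p0 + N <= m -> c0 < p0 ->
  otbl M m K ob0 p0 c0 ->
  wp OUTER (fun n M' => n <= N * (Blev m K).+3 + 1 /\
    (exists ob nb, M' 9 = ob /\ M' 10 = nb /\ (ob = 100 /\ nb = 101 \/ ob = 101 /\ nb = 100) /\
       otbl M' m K ob (p0 + N) (c0 + N)) /\
    M' 11 = p0 + N /\ (M' 15 = K.+1 * (2 * m) \/ M' 15 = M 15) /\
    (forall x, x < 9 \/ x = 23 -> M' x = M x)) M.
Proof.
move=> h1 h4 h5 h8 h9 h10 h11 h24 hobnb hp hpN hc tb.
apply: (wp_for (N := N) (B := (Blev m K).+1)
  (P := fun i M1 => (exists ob nb, M1 9 = ob /\ M1 10 = nb /\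
         (ob = 100 /\ nb = 101 \/ ob = 101 /\ nb = 100) /\ otbl M1 m K ob (p0 + i) (c0 + i)) /\
         M1 11 = p0 + i /\ (M1 15 = K.+1 * (2 * m) \/ M1 15 = M 15) /\
         (forall x, x < 9 \/ x = 23 -> M1 x = M x))) => //.
- split; first by exists ob0, nb0; rewrite !addn0.
  by rewrite addn0; split => //; split; [right|].
- move=> i M1 iN [[ob [nb [g9 [g10 [gd gtb]]]]] [g11 [g15 gfr]]] g24.
  have g1 : M1 1 = K by rewrite gfr //; lia.
  have g4 : M1 4 = 1 by rewrite gfr //; lia.
  have g5 : M1 5 = 0 by rewrite gfr //; lia.
  have g8 : M1 8 = 2 * m by rewrite gfr //; lia.
  cbn [block]; apply: wp_seq; apply: wp_conseq.
    by apply: (@level_spec M1 m K ob nb (p0 + i) (c0 + i)) => //; lia.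
  move=> n M2 [Hn [f9 [f10 [f11 [f15 [ffr ftb]]]]]].
  have e4 : M2 4 = 1 by rewrite ffr //; lia.
  have e24 : M2 24 = N - i by rewrite ffr //; lia.
  wstep.
  split; first by rewrite /Blev in Hn *; lia.
  split; last by lia.
  split.
    exists nb, ob; split => //; split => //; split; first by lia.
    by move=> k v Hk Hv; norm; rewrite !addnS; apply: ftb => //; lia.
  split; first by lia.
  split; first by left.
  move=> x Hx; norm; rewrite ffr ?gfr //; lia.
Qed.

Lemma cost_bound m K n c : 1 <= m -> K.+1 <= m * m -> n.-1 + c <= m -> n <= m ->
  11 + ((n.-1 * (Blev m K).+3 + 1) + ((K.+1 * (n * 9 + 12) + 6) + (1 +
     ((c * (Blev m K).+3 + 1) + 5)))) <= 100 * m ^ 5 + 100.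
Proof.
move=> hm hK hnc hn.
have h1 : m * (12 * m + 25) + 8 <= 45 * (m * m) by nia.
have h2 : Blev m K <= m * m * (45 * (m * m)) + 8.
  rewrite /Blev leq_add2r; apply: leq_mul => //.
have h3 : n.-1 * (Blev m K).+3 + c * (Blev m K).+3 <= m * (m * m * (45 * (m * m)) + 11).
  rewrite -mulnDl; apply: leq_mul => //; lia.
have h4 : K.+1 * (n * 9 + 12) <= m * m * (21 * m).
  apply: leq_mul => //; lia.
have -> : m ^ 5 = m * (m * m * (m * m)) by rewrite !expnS expn0 muln1 !mulnA.
nia.
Qed.

Definition MAIN := block [::
  CI (IConst 4 1); CI (ISub 23 2 4); CI (ISub 6 3 4); CI (ISub 7 0 23); CI (IAdd 8 0 0);
  CI (IConst 9 100); CI (IConst 10 101); CI (IConst 11 1);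
  CI (IConst 21 1); CI (IStore 9 21); CI (ISub 24 7 4);
  OUTER; REV; CI (IAdd 24 23 5); OUTER;
  CI (IAdd 21 9 15); CI (ISub 21 21 8); CI (IAdd 21 21 6); CI (IAdd 21 21 6);
  CI (ILoad 0 21) ].

Lemma main_spec m k j i : 0 < m -> k <= m * (m - 1) %/ 2 -> 1 <= j <= m -> 1 <= i <= m ->
  wp MAIN (fun n M' => n <= 100 * m ^ 5 + 100 /\ M' 0 = T m k j i) (init4 m k j i).2.
Proof.
move=> hm hk hj hi.
set M0 := (init4 m k j i).2.
have h0 : M0 0 = m by [].
have h1 : M0 1 = k by [].
have h2 : M0 2 = j by [].
have h3 : M0 3 = i by [].
have hz : forall x, 3 < x -> M0 x = 0.
  by move=> [|[|[|[|x]]]].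
have h5 : M0 5 = 0 by apply: hz.
have hK : k.+1 <= m * m.
  have : m * (m - 1) %/ 2 <= m * (m - 1) by apply: leq_div.
  nia.
clearbody M0.
rewrite /MAIN; do 11 wstep.
apply: wp_seq; apply: wp_conseq.
  apply: (@outer_spec _ m k (m - j.-1).-1 1 0 100 101); try by norm; lia.
  move=> k' v' Hk Hv.
  have -> : v' = 0 by lia.
  case: k' Hk => [|k'] Hk.
    by norm; rewrite cntn_base.
  have : 0 < k'.+1 * m by rewrite muln_gt0; lia.
  move=> hint; norm; rewrite hz; last by lia.
  by rewrite cntn_base.
move=> n1 M1 [Hn1 [[ob [nb [g9 [g10 [gd gtb]]]]] [g11 [g15 gfr]]]].
have g0 : M1 0 = m by rewrite gfr; [norm|lia].
have g1 : M1 1 = k by rewrite gfr; [norm; try lia|lia].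
have g4 : M1 4 = 1 by rewrite gfr; [norm; try lia|lia].
have g5 : M1 5 = 0 by rewrite gfr; [norm; try lia|lia].
have g6 : M1 6 = i - 1 by rewrite gfr; [norm; try lia|lia].
have g8 : M1 8 = 2 * m by rewrite gfr; [norm; try lia|lia].
have g23 : M1 23 = j - 1 by rewrite gfr; [norm; try lia|lia].
apply: wp_seq; apply: wp_conseq.
  apply: (@rev_spec M1 m k ob nb (m - (j - 1))) => //; try lia.
  by move=> k' v' Hk Hv; rewrite gtb //; [congr cntn; lia | lia].
move=> n2 M2 [Hn2 [f9 [f10 [f11 [f15 [ffr ftb]]]]]].
have e1 : M2 1 = k by rewrite ffr //; lia.
have e4 : M2 4 = 1 by rewrite ffr //; lia.
have e5 : M2 5 = 0 by rewrite ffr //; lia.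
have e6 : M2 6 = i - 1 by rewrite ffr //; lia.
have e8 : M2 8 = 2 * m by rewrite ffr //; lia.
have e23 : M2 23 = j - 1 by rewrite ffr //; lia.
wstep.
apply: wp_seq; apply: wp_conseq.
  apply: (@outer_spec _ m k (j - 1) (m - (j - 1)) 0 nb ob); try by norm; lia.
  by move=> k' v' Hk Hv; norm; apply: ftb.
move=> n3 M3 [Hn3 [[ob' [nb' [d9 [d10 [dd dtb]]]]] [d11 [d15 dfr]]]].
have d6 : M3 6 = i - 1 by rewrite dfr; [norm; try lia|lia].
have d8 : M3 8 = 2 * m by rewrite dfr; [norm; try lia|lia].
have d15' : M3 15 = k.+1 * (2 * m) by case: d15 => ->; norm.
do 5 wstep.
split.
  have := @cost_bound m k (m - (j - 1)) (j - 1) hm hK ltac:(lia) ltac:(lia).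
  move=> HB; apply: leq_trans HB; lia.
have -> : ob' + k.+1 * (2 * m) - 2 * m + (i - 1) + (i - 1) = ob' + 2 * (k * m + (i - 1)) by lia.
rewrite dtb; [|lia|lia].
rewrite T_cntn; congr cntn; lia.
Qed.

Theorem lemma2 :
  exists (p : program) (c d : nat),
    forall m k j i : nat,
      0 < m -> k <= m * (m - 1) %/ 2 ->
      1 <= j <= m -> 1 <= i <= m ->
      exists M : memory,
        run p (c * m ^ d + c) (init4 m k j i) = Some M /\ M 0 = T m k j i.
Proof.
exists (compile 0 MAIN), 100, 5 => m k j i hm hk hj hi.
have [n [M' [HE [Hn HM]]]] := main_spec hm hk hj hi.
exists M'; split => //.
exact: run_exec HE Hn.
Qed.
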